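(* Let $\mathbb{F}_q$ be a finite field of odd characteristic, let $S_j=\{x\in\mathbb{F}_q^d : Q(x)=j\}$ with $j\in\mathbb{F}_q^*$ and $Q$ a non-degenerate quadratic form over $\mathbb{F}_q$, and let $E\subset S_j$. Then for all $z\in\mathbb{F}_q^d$, \[\#\{(x,y)\in E\times E: x-y+z\in S_j\}\lesssim (\#E)^2q^{-1}+(\#E)q^{\frac{d-1}{2}},\] where the implied constant is independent of $z$.
   Context: A quadratic form $Q(x)=\sum_{i,k=1}^d a_{ik}x_ix_k$ with $a_{ik}=a_{ki}\in\mathbb{F}_q$ is non-degenerate if the matrix $(a_{ik})$ is invertible. $X\lesssim Y$ means $X\le CY$ with $C$ independent of $q$ (and of $E$). *)

(* Defs.v *)
From mathcomp Require Import all_boot all_order all_algebra all_field.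
From Stdlib Require Import Reals.
Set Implicit Arguments. Unset Strict Implicit. Unset Printing Implicit Defensive.
Import GRing.Theory.
Local Open Scope ring_scope.

Definition qform (F : finFieldType) (d : nat) (A : 'M[F]_d) (x : 'rV[F]_d) : F :=
  \sum_(i < d) \sum_(k < d) A i k * x 0 i * x 0 k.

Definition qsphere (F : finFieldType) (d : nat) (A : 'M[F]_d) (j : F)
  : {set 'rV[F]_d} := [set x | qform A x == j].

Definition pair_count (F : finFieldType) (d : nat) (A : 'M[F]_d) (j : F)
  (E : {set 'rV[F]_d}) (z : 'rV[F]_d) : nat :=
  #|[set p : 'rV[F]_d * 'rV[F]_d |
      [&& p.1 \in E, p.2 \in E & p.1 - p.2 + z \in qsphere A j]]|.

(* Main.v *)
Require Import Defs.
From mathcomp Require Import all_boot all_order all_algebra all_field.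
From mathcomp Require Import ring lra zify.
Set Implicit Arguments. Unset Strict Implicit. Unset Printing Implicit Defensive.
Import Order.TTheory GRing.Theory Num.Theory.
Local Open Scope ring_scope.

Lemma CS (R : realDomainType) (T : finType) (P : pred T) (f g : T -> R) :
  (\sum_(i | P i) f i * g i) ^+ 2 <=
  (\sum_(i | P i) f i ^+ 2) * (\sum_(i | P i) g i ^+ 2).
Proof.
have H : 0 <= \sum_(i | P i) \sum_(k | P k) (f i * g k - f k * g i) ^+ 2.
  by apply: sumr_ge0 => i _; apply: sumr_ge0 => k _; apply: sqr_ge0.
have E : \sum_(i | P i) \sum_(k | P k) (f i * g k - f k * g i) ^+ 2 =
   ((\sum_(i | P i) f i ^+ 2) * (\sum_(i | P i) g i ^+ 2)) +
   ((\sum_(i | P i) g i ^+ 2) * (\sum_(i | P i) f i ^+ 2)) -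
   2 * ((\sum_(i | P i) f i * g i) * (\sum_(i | P i) f i * g i)).
  rewrite !big_distrlr /= mulr_sumr -!big_split /= -sumrB.
  apply: eq_bigr => i _; rewrite mulr_sumr -!big_split -sumrB /=.
  apply: eq_bigr => k _; ring.
rewrite E in H. rewrite expr2. set a := \sum_(i | P i) _ in H *.
set b := \sum_(i | P i) _ in H *. set c := \sum_(i | P i) _ in H *.
nra.
Qed.

Section Fib.
Variable (F : finFieldType) (d : nat).
Definition dot (u v : 'rV[F]_d) : F := \sum_(k < d) u 0 k * v 0 k.

Lemma dotDl u u' v : dot (u + u') v = dot u v + dot u' v.
Proof. by rewrite /dot -big_split; apply: eq_bigr => k _; rewrite mxE mulrDl. Qed.
Lemma dotZl c u v : dot (c *: u) v = c * dot u v.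
Proof. by rewrite /dot mulr_sumr; apply: eq_bigr => k _; rewrite mxE mulrA. Qed.
Lemma dotC u v : dot u v = dot v u.
Proof. by apply: eq_bigr => k _; rewrite mulrC. Qed.
Lemma dotDr u v v' : dot u (v + v') = dot u v + dot u v'.
Proof. by rewrite dotC dotDl !(dotC u). Qed.
Lemma dotZr c u v : dot u (c *: v) = c * dot u v.
Proof. by rewrite dotC dotZl dotC. Qed.
Lemma dotNr u v : dot u (- v) = - dot u v.
Proof. by rewrite -scaleN1r dotZr mulN1r. Qed.
Lemma dotBr u v v' : dot u (v - v') = dot u v - dot u v'.
Proof. by rewrite dotDr dotNr. Qed.

Lemma card_rV : #|'rV[F]_d| = (#|F| ^ d)%N.
Proof. by rewrite card_mx mul1n. Qed.

Lemma exists_dual (v : 'rV[F]_d) : v != 0 -> exists u, dot u v = 1.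
Proof.
move=> vn0.
have [k vk] : exists k, v 0 k != 0.
  apply/existsP; apply: contraR vn0 => /existsPn H; apply/eqP/rowP => k.
  by rewrite mxE; apply/eqP; move: (H k); rewrite negbK.
exists ((v 0 k)^-1 *: delta_mx 0 k).
rewrite dotZl /dot (bigD1 k) //= big1 => [|i /negbTE ik].
  by rewrite mxE !eqxx mul1r addr0 mulVf.
by rewrite mxE ik andbF mul0r.
Qed.

Lemma fiber0_le (v : 'rV[F]_d) : v != 0 ->
  (#|[set w | dot w v == 0%R]| * #|F| <= #|F| ^ d)%N.
Proof.
move=> /exists_dual [u du].
set S := [set w | dot w v == 0].
have inj : {in setX S [set: F] &, injective (fun p : 'rV[F]_d * F => p.1 + p.2 *: u)}.
  move=> [w c] [w' c'] /setXP [] /=; rewrite inE => /eqP h1 _ /setXP [] /=;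
    rewrite inE => /eqP h2 _ /= E.
  have ec : c = c'.
    by move: (congr1 (fun x => dot x v) E); rewrite /= !dotDl !dotZl du h1 h2 !add0r !mulr1.
  by subst c'; move: E => /addIr ->.
have -> : (#|S| * #|F| = #|setX S [set: F]|)%N by rewrite cardsX cardsT.
rewrite -card_rV -(card_in_imset inj).
exact: max_card.
Qed.

Lemma card_sep (P : {set 'rV[F]_d}) (C : pred 'rV[F]_d) :
  (#|[set y in P | C y]| : int) = \sum_(y in P) ((C y : nat)%:R : int).
Proof.
rewrite -sum1_card -natz natr_sum [RHS]big_mkcond /= [LHS]big_mkcond /=.
apply: eq_bigr => y _; rewrite inE; by case: (y \in P); case: (C y).
Qed.

Lemma sum_pairs (h : 'rV[F]_d * F -> int) :
  \sum_(pr in [set pr : 'rV[F]_d * F | pr.1 != 0]) h pr =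
  \sum_(w : 'rV[F]_d | w != 0) \sum_(c : F) h (w, c).
Proof.
rewrite pair_big_dep /=; apply: eq_big => [[w c]|[w c] _] //=.
by rewrite inE andbT.
Qed.

Lemma sum_ind_eq (x : F) : \sum_(c : F) (((x == c) : nat)%:R : int) = 1.
Proof.
rewrite (bigD1 x) //= eqxx big1 ?addr0 // => c /negbTE; by rewrite eq_sym => ->.
Qed.

Lemma card_nz : \sum_(w : 'rV[F]_d | w != 0) (1 : int) = (#|F| ^ d)%:R - 1.
Proof.
rewrite sumr_const.
have -> : #|(fun i : 'rV[F]_d => i != 0)| = #|predC1 (0 : 'rV[F]_d)| by apply: eq_card.
rewrite cardC1 card_rV.
have : (0 < #|F| ^ d)%N by rewrite expn_gt0; apply/orP; left; apply/card_gt0P; exists 0.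
case: (#|F| ^ d)%N => // m _ /=.
by rewrite -addn1 natrD addrK.
Qed.


Definition ind (b : bool) : int := (b : nat)%:R.

Lemma sum_all_ind (C : pred 'rV[F]_d) :
  \sum_(w : 'rV[F]_d) ind (C w) = (#|[set w | C w]| : int).
Proof.
rewrite -sum1_card -natz natr_sum [RHS]big_mkcond /=.
by apply: eq_bigr => w _; rewrite inE /ind; case: (C w).
Qed.

Variable P : {set 'rV[F]_d}.
Definition aa (pr : 'rV[F]_d * F) : int := \sum_(y in P) ind (dot pr.1 y == pr.2).
Definition DD := [set pr : 'rV[F]_d * F | pr.1 != 0].

Lemma SA : \sum_(pr in DD) aa pr = (#|P| : int) * ((#|F| ^ d)%:R - 1).
Proof.
rewrite sum_pairs -card_nz mulr_sumr; apply: eq_bigr => w _.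
rewrite /aa /= exchange_big /=.
rewrite (eq_bigr (fun _ => 1)) ?sumr_const ?mulr1 -?natz //.
by move=> y _; apply: sum_ind_eq.
Qed.

Definition gg (y y' : 'rV[F]_d) : int := \sum_(w : 'rV[F]_d | w != 0) ind (dot w y == dot w y').

Lemma SA2 : \sum_(pr in DD) (aa pr) ^+ 2 = \sum_(y in P) \sum_(y' in P) gg y y'.
Proof.
rewrite sum_pairs /gg.
rewrite (eq_bigr (fun w => \sum_(y in P) \sum_(y' in P) ind (dot w y == dot w y'))).
  by rewrite exchange_big /=; apply: eq_bigr => y _; rewrite exchange_big.
move=> w _; rewrite /aa /=.
under eq_bigr do rewrite expr2 big_distrlr /=.
rewrite exchange_big /=; apply: eq_bigr => y _.
rewrite exchange_big /=; apply: eq_bigr => y' _.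
rewrite (bigD1 (dot w y)) //= big1 ?addr0.
  by rewrite /ind eqxx mul1r eq_sym.
by move=> c /negbTE; rewrite /ind eq_sym => ->; rewrite mul0r.
Qed.

Lemma gg_bound (y y' : 'rV[F]_d) :
  (#|F| : int) * gg y y' <=
  ((#|F| ^ d)%:R - (#|F| : int)) + ind (y == y') * ((#|F| : int) * (#|F| ^ d)%:R - (#|F| ^ d)%:R).
Proof.
have [<-|neq] := eqVneq y y'.
  rewrite /gg (eq_bigr (fun _ => 1)) ?card_nz; last by move=> w _; rewrite eqxx.
  rewrite /ind /= mul1r; lra.
rewrite /ind /= mul0r addr0.
have vn0 : y - y' != 0 by rewrite subr_eq0.
have := fiber0_le vn0.
have e : gg y y' = (#|[set w | dot w (y - y') == 0]| : int) - 1.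
  have d0 : dot 0 (y - y') = 0 by rewrite /dot big1 // => k _; rewrite mxE mul0r.
  rewrite -sum_all_ind (bigD1 0) //= d0 /ind eqxx /= addrC addrK /gg.
  by apply: eq_bigr => w _; rewrite dotBr subr_eq0.
rewrite e; set N := #|_|.
move=> h'.
have : ((N * #|F|)%:R <= (#|F| ^ d)%:R :> int) by rewrite ler_nat.
rewrite natrM -!natz => hh.
have -> : (#|F|%:R : int) * (N%:R - 1) = N%:R * #|F|%:R - #|F|%:R by ring.
by rewrite lerB.
Qed.


Lemma SB :
  \sum_(pr in DD) ((#|F| : int) * aa pr - (#|P| : int)) ^+ 2 <=
  (#|F| : int) * (#|F| ^ d)%:R * (#|P| : int) * ((#|F| : int) - 1).
Proof.
set q : int := #|F|%:R. set Q : int := (#|F| ^ d)%:R. set n : int := #|P|%:R.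
have qE : (#|F| : int) = q by rewrite /q natz.
have nE : (#|P| : int) = n by rewrite /n natz.
rewrite qE nE.
have card_D : \sum_(pr in DD) (1 : int) = (Q - 1) * q.
  rewrite sum_pairs -card_nz mulr_suml; apply: eq_bigr => w _.
  by rewrite sumr_const mul1r.
have S1 := SA. rewrite nE in S1.
have S2 : q * \sum_(pr in DD) (aa pr) ^+ 2 <= n ^+ 2 * (Q - q) + n * (q * Q - Q).
  rewrite SA2 mulr_sumr.
  apply: (@le_trans _ _ (\sum_(y in P) \sum_(y' in P)
      ((Q - q) + ind (y == y') * (q * Q - Q)))).
    apply: ler_sum => y _; rewrite mulr_sumr; apply: ler_sum => y' _.
    by have := gg_bound y y'; rewrite qE.
  have inner : forall y, y \in P -> \sum_(y' in P) ((Q - q) + ind (y == y') * (q * Q - Q))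
       = n * (Q - q) + (q * Q - Q).
    move=> y yP; rewrite big_split /= sumr_const -mulr_natl -/n.
    rewrite -mulr_suml (bigD1 y) //= big1 ?addr0 /ind ?eqxx ?mul1r //.
    by move=> y' /andP [_ /negbTE]; rewrite eq_sym => ->.
  rewrite (eq_bigr _ inner) sumr_const -mulr_natl -/n. rewrite le_eqVlt; apply/orP; left; apply/eqP; ring.
have expand : \sum_(pr in DD) (q * aa pr - n) ^+ 2 =
   q ^+ 2 * \sum_(pr in DD) (aa pr) ^+ 2 - 2 * q * n * \sum_(pr in DD) aa pr
   + n ^+ 2 * \sum_(pr in DD) (1 : int).
  rewrite !mulr_sumr -sumrB -big_split /=; apply: eq_bigr => pr _; ring.
rewrite expand S1 card_D.
have q0 : 0 <= q by rewrite /q ler0n.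
have n0 : 0 <= n by rewrite /n ler0n.
have S2' := ler_wpM2l q0 S2.
rewrite mulrA -expr2 in S2'.
set X := \sum_(pr in DD) _ in S2' *.
have : n ^+ 2 * q * (q - 1) >= 0.
  have q1 : 1 <= q by rewrite /q ler1n; apply/card_gt0P; exists 0.
  apply: mulr_ge0; first by apply: mulr_ge0 => //; apply: sqr_ge0.
  by rewrite subr_ge0.
nra.
Qed.


Lemma regroup (T : finType) (I : {set T}) (p : T -> 'rV[F]_d * F) (h : 'rV[F]_d * F -> int) :
  (forall i, i \in I -> (p i).1 != 0) ->
  \sum_(i in I) h (p i) = \sum_(pr in DD) (#|[set i in I | p i == pr]| : int) * h pr.
Proof.
move=> Hp.
rewrite (partition_big p (fun pr => pr \in DD)); last by move=> i iI; rewrite inE Hp.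
apply: eq_bigr => pr _.
rewrite (eq_bigr (fun _ => h pr)); last by move=> i /andP [_ /eqP ->].
rewrite sumr_const -mulr_natl -natz; congr (_ * _); congr (_%:R).
by apply: eq_card => i; rewrite inE.
Qed.

Lemma key (T : finType) (I : {set T}) (p : T -> 'rV[F]_d * F) (M : nat) :
  (forall i, i \in I -> (p i).1 != 0) ->
  (forall pr, #|[set i in I | p i == pr]| <= M)%N ->
  ((#|F| : int) * (\sum_(i in I) aa (p i)) - (#|I| : int) * (#|P| : int)) ^+ 2 <=
  (M : int) * (#|I| : int) *
  ((#|F| : int) * (#|F| ^ d)%:R * (#|P| : int) * ((#|F| : int) - 1)).
Proof.
move=> Hp HM.
set m := fun pr => (#|[set i in I | p i == pr]| : int).
have cI : (#|I| : int) = \sum_(pr in DD) m pr.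
  rewrite -sum1_card -natz natr_sum (regroup (fun _ => 1) Hp).
  by apply: eq_bigr => pr _; rewrite mulr1.
have e : (#|F| : int) * (\sum_(i in I) aa (p i)) - (#|I| : int) * (#|P| : int) =
   \sum_(pr in DD) m pr * ((#|F| : int) * aa pr - (#|P| : int)).
  rewrite (regroup aa Hp) cI mulr_sumr mulr_suml -sumrB; apply: eq_bigr => pr _.
  rewrite /m; ring.
rewrite e.
apply: le_trans (CS _ _ _) _.
have m2 : \sum_(pr in DD) m pr ^+ 2 <= (M : int) * (#|I| : int).
  rewrite cI mulr_sumr; apply: ler_sum => pr _.
  rewrite expr2; apply: ler_wpM2r; first by rewrite /m.
  by rewrite /m lez_nat HM.
apply: le_trans (ler_pM _ _ m2 SB) _ => //.
- by apply: sumr_ge0 => pr _; apply: sqr_ge0.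
- by apply: sumr_ge0 => pr _; apply: sqr_ge0.
Qed.

End Fib.

Lemma card_sepT (T : finType) (P : {set T}) (C : pred T) :
  (#|[set y in P | C y]| : int) = \sum_(y in P) ind (C y).
Proof.
rewrite -sum1_card -natz natr_sum [RHS]big_mkcond /= [LHS]big_mkcond /=.
apply: eq_bigr => y _; rewrite inE /ind; by case: (y \in P); case: (C y).
Qed.

Lemma card_allT (T : finType) (C : pred T) :
  (#|[set y | C y]| : int) = \sum_y ind (C y).
Proof.
rewrite -sum1_card -natz natr_sum [LHS]big_mkcond /=.
by apply: eq_bigr => w _; rewrite inE /ind; case: (C w).
Qed.

Section Main.
Variables (F : finFieldType) (d : nat) (A : 'M[F]_d) (j : F).
Hypotheses (h2 : (2 \notin [pchar F])%N) (hsym : A^T = A) (hA : A \in unitmx) (hj : j != 0).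

Definition bf (x y : 'rV[F]_d) := dot (x *m A) y.

Lemma qformE x : qform A x = bf x x.
Proof.
rewrite /qform /bf /dot exchange_big /=; apply: eq_bigr => k _.
rewrite mxE mulr_suml; apply: eq_bigr => i _; ring.
Qed.

Lemma bfC x y : bf x y = bf y x.
Proof.
rewrite /bf /dot.
under eq_bigr do rewrite mxE mulr_suml.
under [RHS]eq_bigr do rewrite mxE mulr_suml.
rewrite exchange_big /=; apply: eq_bigr => i _; apply: eq_bigr => k _.
have -> : A k i = A i k by rewrite -[in LHS]hsym mxE.
ring.
Qed.

Lemma bfDl x x' y : bf (x + x') y = bf x y + bf x' y.
Proof. by rewrite /bf mulmxDl dotDl. Qed.
Lemma bfZl c x y : bf (c *: x) y = c * bf x y.
Proof. by rewrite /bf -scalemxAl dotZl. Qed.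
Lemma bfDr x y y' : bf x (y + y') = bf x y + bf x y'.
Proof. by rewrite /bf dotDr. Qed.
Lemma bfZr c x y : bf x (c *: y) = c * bf x y.
Proof. by rewrite /bf dotZr. Qed.
Lemma bfNl x y : bf (- x) y = - bf x y.
Proof. by rewrite -scaleN1r bfZl mulN1r. Qed.
Lemma bfNr x y : bf x (- y) = - bf x y.
Proof. by rewrite -scaleN1r bfZr mulN1r. Qed.

Lemma qformB u v : qform A (u - v) = qform A u - 2 * bf u v + qform A v.
Proof.
rewrite !qformE bfDl !bfDr !bfNl !bfNr (bfC v u) opprK; ring.
Qed.

Lemma qformZ c u : qform A (c *: u) = c ^+ 2 * qform A u.
Proof. by rewrite !qformE bfZl bfZr; ring. Qed.

Lemma qform0 : qform A 0 = 0.
Proof. by rewrite -(scale0r 0) qformZ expr2 !mul0r. Qed.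

Lemma two_nz : (2 : F) != 0.
Proof.
by apply: contra h2 => /eqP h; rewrite inE /=; apply/eqP.
Qed.

Variables (E : {set 'rV[F]_d}) (z : 'rV[F]_d).
Hypothesis hE : E \subset qsphere A j.

Lemma inE_Q y : y \in E -> qform A y = j.
Proof. by move=> /(subsetP hE); rewrite inE => /eqP. Qed.

Lemma ind_and a b : ind (a && b) = ind a * ind b.
Proof. by rewrite /ind; case: a; case: b; rewrite ?mul1r ?mul0r. Qed.

Lemma cnt_split : (pair_count A j E z : int) =
  \sum_(x in E) \sum_(y in E) ind (qform A (x - y + z) == j).
Proof.
rewrite /pair_count card_allT.
rewrite (_ : \sum_p _ = \sum_x \sum_y ind [&& x \in E, y \in E & x - y + z \in qsphere A j]);
  last by rewrite pair_bigA.
rewrite [RHS]big_mkcond /=; apply: eq_bigr => x _.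
case: (x \in E) => /=; last by rewrite big1 // => y _; rewrite /ind.
rewrite [RHS]big_mkcond /=.
apply: eq_bigr => y _; case: (y \in E) => //=; by rewrite inE.
Qed.

Lemma rel_good x y : x \in E -> y \in E ->
  (qform A (x - y + z) == j) = (dot ((x + z) *m A) y == qform A (x + z) / 2).
Proof.
move=> xE yE.
have -> : x - y + z = (x + z) - y by rewrite addrAC.
rewrite qformB (inE_Q yE) -/(bf _ _).
have t := two_nz.
apply/eqP/eqP => h.
  apply: (mulfI t); rewrite mulrCA divff // mulr1.
  move: h => /eqP; rewrite -subr_eq0 => /eqP h.
  apply/eqP; rewrite -subr_eq0 -oppr_eq0; apply/eqP; rewrite -h; ring.
rewrite h mulrCA divff // mulr1; ring.
Qed.

Lemma rel_bad x y : x \in E -> y \in E -> qform A (x + z) = 0 ->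
  (qform A (x - y + z) == j) = (dot (y *m A) x == - bf z y).
Proof.
move=> xE yE hx.
have -> : x - y + z = (x + z) - y by rewrite addrAC.
rewrite qformB (inE_Q yE) hx -/(bf _ _) bfDl (bfC x y) /bf.
have t := two_nz.
apply/eqP/eqP => h.
  have : 2 * (dot (y *m A) x + dot (z *m A) y) = 0.
    by apply/eqP; rewrite -subr_eq0 -[X in X - _ == _]subr0 -(subrr j) -{2}h; apply/eqP; ring.
  move/eqP; rewrite mulf_eq0 (negbTE t) /= addr_eq0 => /eqP ->; done.
rewrite h; ring.
Qed.


Lemma cancelA (u u' : 'rV[F]_d) : u *m A = u' *m A -> u = u'.
Proof. by move=> e; rewrite -(mulmxK hA u) e mulmxK. Qed.

Lemma scale_inv (l l' : F) (u u' : 'rV[F]_d) : l != 0 ->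
  l *: (u *m A) = l' *: (u' *m A) -> u = (l' / l) *: u'.
Proof.
move=> ln0 e; apply: cancelA.
by rewrite -scalemxAl [l' / l]mulrC -scalerA -e scalerA mulVf // scale1r.
Qed.

Definition Ig := [set p : 'rV[F]_d * F | [&& p.1 \in E, qform A (p.1 + z) != 0 & p.2 != 0]].
Definition pg (p : 'rV[F]_d * F) : 'rV[F]_d * F :=
  (p.2 *: ((p.1 + z) *m A), p.2 * (qform A (p.1 + z) / 2)).

Lemma good_mult pr : (#|[set i in Ig | pg i == pr]| <= 1)%N.
Proof.
apply/card_le1_eqP => [[x l]] [x' l']; rewrite !inE /= => /andP [/and3P [xE qx ln0] /eqP e1]
  /andP [/and3P [xE' qx' ln0'] /eqP e2].
rewrite -e2 in e1; case: e1 => e1 e2'.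
have hu := scale_inv ln0 e1.
move: e2'; rewrite hu qformZ => e3.
have t := two_nz.
have c0 : qform A (x' + z) / 2 != 0 by rewrite mulf_neq0 ?invr_eq0.
have e4 : l * (l' / l) ^+ 2 = l'.
  apply: (mulIf c0); by rewrite -e3; rewrite !mulrA.
have ll : l' = l.
  have e5 : l' * l' = l' * l by rewrite -[X in X * l]e4; field.
  exact: (mulfI ln0').
by move: hu; rewrite ll divff // scale1r => /addIr ->.
Qed.


Lemma split_pairs (Px : pred 'rV[F]_d) (h : 'rV[F]_d * F -> int) :
  \sum_(i in [set p : 'rV[F]_d * F | Px p.1 && (p.2 != 0)]) h i =
  \sum_(x | Px x) \sum_(l : F | l != 0) h (x, l).
Proof.
rewrite pair_big_dep /=; apply: eq_big => [[x l]|[x l] _] //; by rewrite inE.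
Qed.

Lemma sum_nz_const (c : int) : \sum_(l : F | l != 0) c = ((#|F| : int) - 1) * c.
Proof.
rewrite sumr_const.
have -> : #|(fun l : F => l != 0)| = #|predC1 (0 : F)| by apply: eq_card.
rewrite cardC1 -mulr_natl.
have : (0 < #|F|)%N by apply/card_gt0P; exists 0.
case: #|F| => // m _ /=. congr (_ * _). rewrite -natz. by rewrite -addn1 natrD addrK natz.
Qed.

Lemma aa_scale (P : {set 'rV[F]_d}) (l c : F) (w : 'rV[F]_d) : l != 0 ->
  aa P (l *: w, l * c) = aa P (w, c).
Proof.
move=> ln0; apply: eq_bigr => y _ /=; by rewrite dotZl (inj_eq (mulfI ln0)).
Qed.

Definition GG := \sum_(x in E | qform A (x + z) != 0) \sum_(y in E) ind (qform A (x - y + z) == j).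
Definition gE := [set x in E | qform A (x + z) != 0].

Lemma Ig_eq : Ig = [set p : 'rV[F]_d * F | ((p.1 \in E) && (qform A (p.1 + z) != 0)) && (p.2 != 0)].
Proof. by apply/setP => p; rewrite !inE andbA. Qed.

Lemma good_sum : \sum_(i in Ig) aa E (pg i) = ((#|F| : int) - 1) * GG.
Proof.
rewrite Ig_eq (split_pairs (fun x => (x \in E) && (qform A (x + z) != 0))) /GG mulr_sumr; apply: eq_bigr => x /andP [xE qx].
rewrite (eq_bigr (fun _ => \sum_(y in E) ind (qform A (x - y + z) == j))).
  by rewrite sum_nz_const.
move=> l ln0; rewrite /pg /= aa_scale //; apply: eq_bigr => y yE /=.
by rewrite rel_good.
Qed.

Lemma card_Ig : (#|Ig| : int) = ((#|F| : int) - 1) * (#|gE| : int).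
Proof.
rewrite -sum1_card -natz natr_sum Ig_eq (split_pairs (fun x => (x \in E) && (qform A (x + z) != 0))).
have -> : (#|gE| : int) = \sum_(x in gE) 1 by rewrite -sum1_card -natz natr_sum.
rewrite mulr_sumr.
rewrite [RHS](eq_bigl (fun x => (x \in E) && (qform A (x + z) != 0))); last by move=> x; rewrite inE.
by apply: eq_bigr => x _; rewrite sum_nz_const.
Qed.

Lemma pg_nz i : i \in Ig -> (pg i).1 != 0.
Proof.
case: i => x l; rewrite inE /= => /and3P [_ qx ln0].
rewrite scaler_eq0 negb_or ln0 /=.
apply: contra qx => /eqP e; apply/eqP.
have : x + z = 0 by apply: cancelA; rewrite e mul0mx.
by move=> ->; rewrite qform0.
Qed.


Definition Ib := [set p : 'rV[F]_d * F | (p.1 \in E) && (p.2 != 0)].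
Definition Eb := [set x in E | qform A (x + z) == 0].
Definition pb (p : 'rV[F]_d * F) : 'rV[F]_d * F := (p.2 *: (p.1 *m A), p.2 * (- bf z p.1)).
Definition BB := \sum_(x in E | qform A (x + z) == 0) \sum_(y in E) ind (qform A (x - y + z) == j).

Lemma bad_sum : \sum_(i in Ib) aa Eb (pb i) = ((#|F| : int) - 1) * BB.
Proof.
rewrite /Ib (split_pairs (fun x => x \in E)).
rewrite (eq_bigr (fun y => ((#|F| : int) - 1) * aa Eb (y *m A, - bf z y))).
  rewrite -mulr_sumr /BB; congr (_ * _).
  rewrite [RHS](eq_bigl (fun x => x \in Eb)); last by move=> x; rewrite inE.
  rewrite exchange_big /=; apply: eq_bigr => y yE.
  apply: eq_bigr => x xE; move: yE; rewrite /Eb inE => /andP [yE' /eqP qy].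
  by rewrite (rel_bad yE' xE qy).
move=> y yE; rewrite -sum_nz_const; apply: eq_bigr => l ln0.
by rewrite /pb /= aa_scale.
Qed.

Lemma card_Ib : (#|Ib| : int) = ((#|F| : int) - 1) * (#|E| : int).
Proof.
rewrite -sum1_card -natz natr_sum /Ib (split_pairs (fun x => x \in E)).
have -> : (#|E| : int) = \sum_(x in E) 1 by rewrite -sum1_card -natz natr_sum.
rewrite mulr_sumr; by apply: eq_bigr => x _; rewrite sum_nz_const.
Qed.

Lemma y_nz y : y \in E -> y != 0.
Proof.
move=> yE; apply: contra hj => /eqP e.
by rewrite -(inE_Q yE) e qform0.
Qed.

Lemma pb_nz i : i \in Ib -> (pb i).1 != 0.
Proof.
case: i => y l; rewrite inE /= => /andP [yE ln0].
rewrite scaler_eq0 negb_or ln0 /=.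
apply: contra (y_nz yE) => /eqP e; apply/eqP.
by apply: cancelA; rewrite e mul0mx.
Qed.

Lemma bad_mult pr : (#|[set i in Ib | pb i == pr]| <= 2)%N.
Proof.
set S := [set i in Ib | pb i == pr].
case: (set_0Vmem S) => [-> | [[y1 l1] Hi]]; first by rewrite cards0.
have sub : S \subset [set (y1, l1); (- y1, - l1)].
  apply/subsetP => [[y l]] H.
  move: Hi H; rewrite !inE /= => /andP [/andP [y1E l1n0] /eqP e1] /andP [/andP [yE ln0] /eqP e2].
  rewrite -e2 in e1; case: e1 => e1 _.
  have hu := scale_inv ln0 (esym e1).
  set mu := l1 / l in hu.
  have : mu ^+ 2 == 1.
    have := inE_Q yE; rewrite hu qformZ (inE_Q y1E) => e.
    apply/eqP; apply: (mulIf hj); by rewrite e mul1r.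
  rewrite sqrf_eq1 => /orP [/eqP m1 | /eqP m1].
    have ll : l1 = l by rewrite -[l1](divfK ln0) -/mu m1 mul1r.
    by rewrite ?inE hu m1 scale1r ll eqxx. 
  have ll : l = - l1 by rewrite -[l1](divfK ln0) -/mu m1 mulN1r opprK.
  by rewrite ?inE hu m1 scaleN1r ll !eqxx orbT.
apply: leq_trans (subset_leq_card sub) _.
by rewrite cards2; case: (_ != _).
Qed.


Lemma q_gt1 : (1 < #|F|)%N.
Proof.
have := max_card [set (0 : F); 1]; rewrite cards2 eq_sym oner_eq0 /=.
done.
Qed.

Lemma count_split : (pair_count A j E z : int) = GG + BB.
Proof.
rewrite cnt_split (bigID (fun x => qform A (x + z) == 0)) /= addrC.
done.
Qed.

Lemma int_good :
  ((#|F| : int) * GG - (#|gE| : int) * (#|E| : int)) ^+ 2 <=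
  (#|gE| : int) * ((#|F| : int) * (#|F| ^ d)%:R * (#|E| : int)).
Proof.
have k := @key _ _ E _ _ _ 1 pg_nz good_mult.
rewrite good_sum card_Ig in k.
set q := (#|F| : int) in k *. set Q : int := (#|F| ^ d)%:R in k *.
set n := (#|E| : int) in k *. set g := (#|gE| : int) in k *.
have q1 : 0 < (q - 1) ^+ 2.
  by rewrite exprn_gt0 // subr_gt0 /q ltz_nat q_gt1.
rewrite -(ler_pM2l q1).
have -> : (q - 1) ^+ 2 * (q * GG - g * n) ^+ 2 = (q * ((q - 1) * GG) - (q - 1) * g * n) ^+ 2 by ring.
apply: le_trans k _; rewrite le_eqVlt; apply/orP; left; apply/eqP; ring.
Qed.

Lemma int_bad :
  ((#|F| : int) * BB - (#|E| : int) * (#|Eb| : int)) ^+ 2 <=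
  2 * (#|E| : int) * ((#|F| : int) * (#|F| ^ d)%:R * (#|Eb| : int)).
Proof.
have k := @key _ _ Eb _ _ _ 2 pb_nz bad_mult.
rewrite bad_sum card_Ib in k.
set q := (#|F| : int) in k *. set Q : int := (#|F| ^ d)%:R in k *.
set n := (#|E| : int) in k *. set b := (#|Eb| : int) in k *.
have q1 : 0 < (q - 1) ^+ 2.
  by rewrite exprn_gt0 // subr_gt0 /q ltz_nat q_gt1.
rewrite -(ler_pM2l q1).
have -> : (q - 1) ^+ 2 * (q * BB - n * b) ^+ 2 = (q * ((q - 1) * BB) - (q - 1) * n * b) ^+ 2 by ring.
apply: le_trans k _; rewrite le_eqVlt; apply/orP; left; apply/eqP. rewrite /=. ring.
Qed.

End Main.

Lemma GG_ge0 (F : finFieldType) d (A : 'M[F]_d) j E z : 0 <= GG A j E z.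
Proof. by apply: sumr_ge0 => x _; apply: sumr_ge0 => y _; rewrite /ind ler0n. Qed.
Lemma BB_ge0 (F : finFieldType) d (A : 'M[F]_d) j E z : 0 <= BB A j E z.
Proof. by apply: sumr_ge0 => x _; apply: sumr_ge0 => y _; rewrite /ind ler0n. Qed.

Lemma int_to_nat (X Y Z : nat) :
  (Posz X - Posz Y) ^+ 2 <= Posz Z -> ((X - Y) * (X - Y) <= Z)%N.
Proof.
case: (leqP Y X) => hxy.
  by rewrite subzn // expr2 -PoszM lez_nat.
by move=> _; have -> : (X - Y = 0)%N by apply/eqP; rewrite subn_eq0 ltnW.
Qed.

Lemma nat_facts (F : finFieldType) d (A : 'M[F]_d) (j : F) (E : {set 'rV[F]_d}) z :
  (2 \notin [pchar F])%N -> A^T = A -> A \in unitmx -> j != 0 -> E \subset qsphere A j ->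
  exists Gn Bn g b : nat,
   [/\ pair_count A j E z = (Gn + Bn)%N, (g <= #|E|)%N, (b <= #|E|)%N,
       ((#|F| * Gn - g * #|E|) * (#|F| * Gn - g * #|E|) <= g * (#|F| * #|F| ^ d * #|E|))%N
     & ((#|F| * Bn - #|E| * b) * (#|F| * Bn - #|E| * b) <= 2 * #|E| * (#|F| * #|F| ^ d * b))%N].
Proof.
move=> h2 hsym hA hj hE.
exists (absz (GG A j E z)), (absz (BB A j E z)), #|gE A E z|, #|Eb A E z|.
have eG : Posz (absz (GG A j E z)) = GG A j E z by rewrite abszE ger0_norm // GG_ge0.
have eB : Posz (absz (BB A j E z)) = BB A j E z by rewrite abszE ger0_norm // BB_ge0.
split.
- apply/eqP; rewrite -eqz_nat PoszD eG eB; apply/eqP; exact: count_split.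
- by apply: subset_leq_card; apply/subsetP => x; rewrite inE => /andP [].
- by apply: subset_leq_card; apply/subsetP => x; rewrite inE => /andP [].
- apply: int_to_nat; rewrite !PoszM eG.
  by have := (int_good h2 hsym hA z hE); rewrite natz.
- apply: int_to_nat; rewrite !PoszM eB.
  by have := (int_bad h2 hsym hA hj z hE); rewrite (natz (#|F| ^ d)).
Qed.

From Stdlib Require Import Reals.
From Stdlib Require Import Lra Psatz.

Lemma to_R (X Y Z : nat) (K : R) : ((X - Y) * (X - Y) <= Z)%nat -> (0 <= K)%R ->
  (INR Z <= K ^ 2)%R -> (INR X <= INR Y + K)%R.
Proof.
move=> h K0 hZ.
case: (leqP X Y) => hxy.
  have := le_INR _ _ (ssrnat.leP hxy). Stdlib.micromega.Lra.lra.
have e : INR (X - Y)%nat = (INR X - INR Y)%R.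
  rewrite -minusE minus_INR //; apply/ssrnat.leP; exact: ltnW.
have h2 : (INR (X - Y)%nat * INR (X - Y)%nat <= INR Z)%R.
  by rewrite -mult_INR; apply: le_INR; apply/ssrnat.leP.
rewrite e in h2.
have := pos_INR X. have := pos_INR Y.
Stdlib.micromega.Lra.nra.
Qed.

Lemma pow_key (s : R) (d : nat) : (0 <= s)%R -> (1 <= s ^ 2)%R ->
  (s ^ (d + 1) <= s ^ 2 * s ^ (d - 1))%R.
Proof.
move=> s0 s1.
case: d => [|k] /=.
  Stdlib.micromega.Lra.nra.
rewrite subn1 /= addn1 /=. Stdlib.micromega.Lra.nra.
Qed.

Local Open Scope ring_scope.
Theorem theorem5p1 :
  forall d : nat, exists C : R, (0 < C)%R /\
  forall (F : finFieldType) (A : 'M[F]_d) (j : F) (E : {set 'rV[F]_d}) (z : 'rV[F]_d),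
    (2 \notin [pchar F])%N ->
    A^T = A -> A \in unitmx ->
    j != 0 ->
    E \subset qsphere A j ->
    (INR (pair_count A j E z)
      <= C * (INR #|E| ^ 2 / INR #|F| + INR #|E| * sqrt (INR #|F|) ^ (d - 1)))%R.
Proof.
move=> d; exists 3%R; split; first by Stdlib.micromega.Lra.lra.
move=> F A j E z h2 hsym hA hj hE.
have [Gn [Bn [g [b [hc hg hb hG hB]]]]] := nat_facts z h2 hsym hA hj hE.
rewrite hc.
set q := #|F| in hG hB *. set n := #|E| in hg hb hG hB *.
have q1 : (1 < q)%nat by exact: q_gt1.
have qR : (1 <= INR q)%R by apply: (le_INR 1); apply/ssrnat.leP; exact: ltnW.
set s := sqrt (INR q).
have s0 : (0 <= s)%R by apply: sqrt_pos.
have s2 : (s ^ 2 = INR q)%R by apply: pow2_sqrt; Stdlib.micromega.Lra.lra.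
have sd : (0 <= s ^ (d + 1))%R by apply: pow_le.
have sd1 : (0 <= s ^ (d - 1))%R by apply: pow_le.
have sq : (s ^ (d + 1) <= INR q * s ^ (d - 1))%R by rewrite -s2; apply: pow_key => //; rewrite s2.
have sqd : ((s ^ (d + 1)) ^ 2 = INR q * INR q ^ d)%R.
  rewrite -pow_mult Nat.mul_comm pow_mult s2 addn1 /=. Stdlib.micromega.Lra.lra.
have nR := pos_INR n. have gR := pos_INR g. have bR := pos_INR b.
have gn : (INR g <= INR n)%R by apply: le_INR; apply/ssrnat.leP.
have bn : (INR b <= INR n)%R by apply: le_INR; apply/ssrnat.leP.
have qd : (0 <= INR q ^ d)%R by apply: pow_le; Stdlib.micromega.Lra.lra.
have G1 := @to_R _ _ _ (INR n * s ^ (d + 1)) hG.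
have B1 := @to_R _ _ _ (2 * INR n * s ^ (d + 1)) hB.
rewrite !mult_INR in G1 B1.
have ex : INR (expn q d) = (INR q ^ d)%R.
  elim: (d) => [|k IH] //; by rewrite expnS mult_INR IH /=.
rewrite ex in G1 B1.
have X0 : (0 <= INR q * INR q ^ d)%R by apply: Rmult_le_pos => //; Stdlib.micromega.Lra.lra.
have eK : ((INR n * s ^ (d + 1)) ^ 2 = INR n * INR n * (INR q * INR q ^ d))%R by rewrite -sqd; ring.
have eK2 : ((2 * INR n * s ^ (d + 1)) ^ 2 = 4 * (INR n * INR n * (INR q * INR q ^ d)))%R by rewrite -sqd; ring.
have G2 : (INR q * INR Gn <= INR g * INR n + INR n * s ^ (d + 1))%R.
  apply: G1; first by apply: Rmult_le_pos.
  rewrite eK.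
  have : (INR g * INR n <= INR n * INR n)%R by apply: Rmult_le_compat_r.
  move: X0; set X := (INR q * INR q ^ d)%R => X0 hh.
  have -> : (INR g * (X * INR n) = (INR g * INR n) * X)%R by ring.
  by apply: Rmult_le_compat_r.
have B2 : (INR q * INR Bn <= INR n * INR b + 2 * INR n * s ^ (d + 1))%R.
  apply: B1; first by apply: Rmult_le_pos => //; apply: Rmult_le_pos => //; Stdlib.micromega.Lra.lra.
  rewrite eK2.
  have : (INR n * INR b <= INR n * INR n)%R by apply: Rmult_le_compat_l.
  move: X0; set X := (INR q * INR q ^ d)%R => X0 hh.
  have -> : (INR 2 * INR n * (X * INR b) = 2 * ((INR n * INR b) * X))%R by simpl INR; ring.
  have hh2 : (INR n * INR b * X <= INR n * INR n * X)%R by apply: Rmult_le_compat_r.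
  have : (0 <= INR n * INR n * X)%R by apply: Rmult_le_pos => //; apply: Rmult_le_pos.
  Stdlib.micromega.Lra.lra.
rewrite plus_INR.
set t := (s ^ (d - 1))%R in sq sd1 *.
set S := (s ^ (d + 1))%R in sq sd sqd G2 B2 *.
have q0 : (0 < INR q)%R by Stdlib.micromega.Lra.lra.
have uE : (INR n ^ 2 / INR q * INR q = INR n ^ 2)%R by field; Stdlib.micromega.Lra.lra.
set u := (INR n ^ 2 / INR q)%R in uE *.
apply: (Rmult_le_reg_l (INR q)) => //.
have h1 : (INR n * S <= INR n * (INR q * t))%R by apply: Rmult_le_compat_l.
have h3 : (INR g * INR n <= INR n * INR n)%R by apply: Rmult_le_compat_r.
have h4 : (INR n * INR b <= INR n * INR n)%R by apply: Rmult_le_compat_l.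
Stdlib.micromega.Lra.nra.
Qed.
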